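(* Let $R$ be a non-trivial totally ordered positive aura such that $x>y$ implies that there exists $t>0$ with $x=y+t$, and suppose that the canonical map $\mathbb{N}\to R$ is injective. If $R$ is archimedean, then $R$ has tempered growth.
   Context: A halo is a commutative unital semiring with a partial order compatible with its operations ($x\le z,y\le t\Rightarrow xy\le zt,\ x+y\le z+t$). An aura is a halo whose underlying semiring is a semifield; it is positive if $0<1$. A halo is trivial if it is $\{0\}$ or equal to $\{0,1\}$ with $0\le1$, $1+1=1$. A positive halo $A$ is archimedean if $A$ is not reduced to $\{0,1\}$ and for all $x>y>0$ there is $n\in\mathbb{N}$ with $ny>x$. A halo $R$ has tempered growth if for every non-zero $P\in\mathbb{N}[X]$ and $x\in R$, ($x^n\le P(n)$ for all $n\in\mathbb{N}$) implies $x\le1$, where natural numbers are interpreted in $R$ as sums of $1$. *)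

(* Defs.v *)
From HB Require Import structures.
From mathcomp Require Import all_boot all_order all_algebra.
Set Implicit Arguments. Unset Strict Implicit. Unset Printing Implicit Defensive.
Import GRing.Theory.
Local Open Scope ring_scope.

Definition is_halo (R : comPzSemiRingType) (le : rel R) : Prop :=
  [/\ (forall x, le x x),
      (forall x y, le x y -> le y x -> x = y),
      (forall x y z, le x y -> le y z -> le x z),
      (forall x y z t, le x z -> le y t -> le (x * y) (z * t))
    & (forall x y z t, le x z -> le y t -> le (x + y) (z + t))].

Definition hlt (R : comPzSemiRingType) (le : rel R) (x y : R) : Prop :=
  le x y /\ x <> y.

Definition is_semifield (R : comPzSemiRingType) : Prop :=
  forall x : R, x <> 0 -> exists y, x * y = 1.

Definition is_aura (R : comPzSemiRingType) (le : rel R) : Prop :=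
  is_halo le /\ is_semifield R.

Definition is_positive (R : comPzSemiRingType) (le : rel R) : Prop :=
  hlt le 0 1.

Definition is_total (R : comPzSemiRingType) (le : rel R) : Prop :=
  forall x y : R, le x y \/ le y x.

Definition is_trivial_halo (R : comPzSemiRingType) (le : rel R) : Prop :=
  (forall x : R, x = 0) \/
  ((forall x : R, x = 0 \/ x = 1) /\ (0 : R) <> 1 /\ le 0 1 /\ (1 + 1 : R) = 1).

Definition is_archimedean (R : comPzSemiRingType) (le : rel R) : Prop :=
  ~ (forall x : R, x = 0 \/ x = 1) /\
  (forall x y : R, hlt le y x -> hlt le 0 y -> exists n : nat, hlt le x (y *+ n)).

(* tempered growth; P(n) for P in N[X] is interpreted in R via the
   canonical map N -> R (a semiring morphism), i.e. (P.[n])%:R. *)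
Definition tempered_growth (R : comPzSemiRingType) (le : rel R) : Prop :=
  forall (P : {poly nat}) (x : R), P != 0 ->
    (forall n : nat, le (x ^+ n) ((P.[n])%:R)) -> le x 1.

(* Main.v *)
Require Import Defs.
From HB Require Import structures.
From mathcomp Require Import all_boot all_order all_algebra.
From mathcomp Require Import zify ring lra.
Import GRing.Theory.
Set Implicit Arguments.

Lemma ffact_lb a N j : 0 < N -> N^j * a^_j <= (a*N)^_j.
Proof.
move=> N0; elim: j => [|j IH]; first by rewrite !ffactn0.
rewrite !ffactnSr expnS.
have -> : N * N ^ j * (a ^_ j * (a - j)) = (N^j * a^_j) * (N * (a - j)) by ring.
apply: leq_mul => //; nia.
Qed.

Lemma binom_lb k N : 0 < N -> N^k <= 'C(k*N, k).
Proof.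
move=> N0; have := (@ffact_lb k N k N0); rewrite ffactnn -bin_ffact.
by rewrite leq_pmul2r ?fact_gt0.
Qed.

Lemma horner_bound (P : {poly nat}) (n : nat) :
  (P.[n])%R <= (\sum_(i < size P) P`_i)%R * (n+1)^(size P).
Proof.
rewrite horner_coef /= big_distrl /=.
apply: leq_sum => i _.
rewrite natrXE; apply: leq_mul => //.
apply: leq_trans (leq_pexp2l _ (ltnW (ltn_ord i))); last by rewrite addn1.
by case: (nat_of_ord i) => [|e] //; rewrite leq_exp2r // addn1.
Qed.

Lemma nat_main (P : {poly nat}) m :
  exists n, m * ((P.[n])%R + 1) <= 'C(n, (size P).+1).
Proof.
set s := size P; set S := (\sum_(i < s) P`_i)%R.
set k := s.+1; set A := (k.*2)^s; set N := m * (S * A + 1) + 1.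
exists (k * N).
have N0 : 0 < N by rewrite /N addn1.
have hC := (@binom_lb k N N0).
have hP := horner_bound P (k * N).
have h1 : (k * N + 1) ^ s <= A * N ^ s.
  rewrite /A -expnMn; case: (s) => [|e] //; rewrite leq_exp2r //.
  rewrite -mul2n; nia.
have B0 : 0 < N ^ s by rewrite expn_gt0 N0.
have hP2 : (P.[k * N])%R <= S * A * N ^ s.
  by apply: (leq_trans hP); rewrite -mulnA leq_mul2l h1 orbT.
apply: leq_trans hC; rewrite /k expnS.
apply: (@leq_trans (m * (S * A * N ^ s + 1))); first by rewrite leq_mul2l leq_add2r hP2 orbT.
move: B0; rewrite /N; set B := N ^ s; nia.
Qed.

Local Open Scope ring_scope.

Theorem lemma1p29 (R : comPzSemiRingType) (le : rel R) :
  is_aura le -> is_positive le -> is_total le -> ~ is_trivial_halo le ->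
  (forall x y : R, hlt le y x -> exists t : R, hlt le 0 t /\ x = y + t) ->
  injective (fun n : nat => (n%:R : R)) ->
  is_archimedean le ->
  tempered_growth le.
Proof.
move=> [[hrefl hanti htrans hmul hadd] hsf] [h01 h01ne] htot hntriv hsub hinj
  [harch1 harch] P x _ hx.
have le0M : forall a b, le 0 a -> le 0 b -> le 0 (a * b).
  by move=> a b ha hb; have := hmul _ _ _ _ ha hb; rewrite mul0r.
have le0X : forall a n, le 0 a -> le 0 (a ^+ n).
  by move=> a n ha; elim: n => [|n IH]; rewrite ?expr0 // exprS le0M.
have le0Mn : forall a n, le 0 a -> le 0 (a *+ n).
  move=> a n ha; elim: n => [|n IH]; rewrite ?mulr0n // mulrS.
  by have := hadd _ _ _ _ ha IH; rewrite addr0.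
have leDr : forall a b, le 0 b -> le a (a + b).
  by move=> a b hb; have := hadd _ _ _ _ (hrefl a) hb; rewrite addr0.
have leMn_mono : forall a i j, le 0 a -> (i <= j)%N -> le (a *+ i) (a *+ j).
  by move=> a i j ha hij; rewrite -(subnKC hij) mulrnDr leDr // le0Mn.
have leMn_l : forall a b n, le a b -> le (a *+ n) (b *+ n).
  move=> a b n hab; elim: n => [|n IH]; first by rewrite !mulr0n; apply: hrefl.
  rewrite !mulrS.
  exact: hadd.
case: (htot x 1) => hx1; first by [].
have [->|nx1] := eqVneq x 1; first exact: hrefl.
have [t [[ht0 ht0ne] xt]] : exists t : R, hlt le 0 t /\ x = 1 + t.
  by apply: hsub; split => // e; rewrite e eqxx in nx1.
set k := (size P).+1.
set u := t ^+ k.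
have u0 : le 0 u by apply: le0X.
have une : (0 : R) <> u.
  have tne : t <> 0 by move=> e; apply: ht0ne; rewrite e.
  have [w tw] := hsf t tne.
  move=> e; apply: h01ne.
  by rewrite -(expr1n _ k) -tw exprMn -/u -e mul0r.
have [m hm] : exists m : nat, le 1 (u *+ m).
  case: (htot 1 u) => h1u; first by exists 1%N; rewrite mulr1n.
  have [e|ne] := eqVneq u 1; first by exists 1%N; rewrite mulr1n e; apply: hrefl.
  have nu1 : u <> 1 by move=> e; rewrite e eqxx in ne.
  have [n [hn _]] := harch 1 u (conj h1u nu1) (conj u0 une).
  by exists n.
have [n hn] := nat_main P m.
set c := 'C(n, k).
have hx0 : le 0 x by apply: (htrans _ _ _ h01 hx1).
have hux : le (u *+ c) (x ^+ n).
  case: (ltnP k n.+1) => hkn; last first.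
    by rewrite /c bin_small // mulr0n le0X.
  rewrite xt exprDn (bigD1 (Ordinal hkn)) //=.
  rewrite expr1n mul1r -/u -/c leDr //.
  apply: (big_ind (fun v => le 0 v)); first exact: hrefl.
    by move=> a b ha hb; have := hadd _ _ _ _ ha hb; rewrite addr0.
  move=> i _; apply: le0Mn; apply: le0M; apply: le0X => //.
set p := (P.[n])%R.
have h2 : le ((p + 1)%:R) (x ^+ n).
  apply: (htrans _ _ _ _ hux); apply: (htrans _ _ _ _ (leMn_mono _ _ _ u0 hn)).
  by rewrite mulrnA; apply: leMn_l.
have h3 : le ((p + 1)%:R) (p%:R) by apply: (htrans _ _ _ h2 (hx n)).
have h4 : le (p%:R) ((p + 1)%:R) by rewrite natrD leDr.
have e : (p + 1)%N = p := hinj _ _ (hanti _ _ h3 h4).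
by move: e; rewrite addn1 => /esym /n_Sn.
Qed.
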